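(* Let $G$ be a two-player stage game and consider the mixed-pure regime. There exist a positive integer $T$ and an SPE of $G(T)$ in which locally suboptimal behavior occurs if and only if at least one of the following holds: (1) $|V_1^{m,p}|>1$, $|V_2^{m,p}|>1$, and there exist $\hat\sigma_1\in\Delta A_1,\hat a_2\in A_2$ with $(\hat\sigma_1,\hat a_2)\notin\mathrm{Nash}^{m,p}(G)$; (2) $|V_1^{m,p}|>1$, $|V_2^{m,p}|=1$, and there exist $\hat\sigma_1\in\Delta A_1$, $a_1'\in A_1$, $\hat a_2\in A_2$ such that (a) $u_1(\hat\sigma_1,\hat a_2)<u_1(a_1',\hat a_2)$, (b) $\hat a_2$ is a best response to $\hat\sigma_1$, and (c) if $|S_{\hat\sigma_1}|>1$, then, with $D=\{u_1(\sigma)-u_1(\sigma'):\sigma,\sigma'\in\mathrm{Nash}^{m,p}(G)\}$, there is $a\in S_{\hat\sigma_1}$ such that for every $a'\in S_{\hat\sigma_1}\setminus\{a\}$ there exist an integer $n_{a'}\ge0$ and $d_1^{a'},\dots,d_{n_{a'}}^{a'}\in D$ with $u_1(a,\hat a_2)-u_1(a',\hat a_2)=\sum_{k=1}^{n_{a'}}d_k^{a'}$; (3) $|V_1^{m,p}|=1$, $|V_2^{m,p}|>1$, and there exist $\hat\sigma_1\in\Delta A_1$, $\hat a_2,a_2'\in A_2$ with $u_2(\hat\sigma_1,\hat a_2)<u_2(\hat\sigma_1,a_2')$ and $\hat\sigma_1$ a best response to $\hat a_2$.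
   Context: A two-player stage game $G$ consists of finite nonempty action sets $A_1,A_2$ and payoff functions $u_1,u_2:A_1\times A_2\to\mathbb{R}$, extended to mixed strategies by expectation; $S_{\sigma_1}=\{a\in A_1:\sigma_1(a)>0\}$ is the support. In the mixed-pure regime, player 1 may use mixed strategies while player 2 is restricted to actions, both in the stage game and in every round of the repeated game (including deviations). $G(T)$ is the $T$-round repetition of $G$ with realized actions observed after each round and payoffs equal to the expected sum of stage payoffs; player 1's strategy maps histories $\bigcup_{k=0}^{T-1}(A_1\times A_2)^k$ to $\Delta A_1$ and player 2's maps histories to $A_2$. A profile is an SPE if its continuation after every history of length $k<T$ is a Nash equilibrium of $G(T-k)$ in this regime. $\mathrm{Nash}^{m,p}(G)$ is the set of $(\sigma_1,a_2)\in\Delta A_1\times A_2$ with $\sigma_1$ a best response to $a_2$ and $a_2$ a best response among actions to $\sigma_1$; $V_i^{m,p}=\{u_i(\sigma):\sigma\in\mathrm{Nash}^{m,p}(G)\}$. Locally suboptimal behavior occurs in an SPE $\mu$ of $G(T)$ if for some history $h$ of length $k<T$, $(\mu_1(h),\mu_2(h))\notin\mathrm{Nash}^{m,p}(G)$. *)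

(* Defs.v *)
From HB Require Import structures.
From mathcomp Require Import all_boot all_order all_algebra.
From mathcomp Require Import reals.
Set Implicit Arguments. Unset Strict Implicit. Unset Printing Implicit Defensive.
Import Order.TTheory GRing.Theory Num.Theory.
Local Open Scope ring_scope.

Section Game.
Variables (R : realType) (A1 A2 : finType).

Definition is_mixed (s : {ffun A1 -> R}) : Prop :=
  (forall a, 0 <= s a) /\ \sum_a s a = 1.

Definition eu (u : A1 -> A2 -> R) (s : {ffun A1 -> R}) (a2 : A2) : R :=
  \sum_a s a * u a a2.

Definition supp (s : {ffun A1 -> R}) : {set A1} := [set a | 0 < s a].

Definition br1 (u1 : A1 -> A2 -> R) (s : {ffun A1 -> R}) (a2 : A2) : Prop :=
  forall s', is_mixed s' -> eu u1 s' a2 <= eu u1 s a2.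
Definition br2 (u2 : A1 -> A2 -> R) (s : {ffun A1 -> R}) (a2 : A2) : Prop :=
  forall a2', eu u2 s a2' <= eu u2 s a2.

Definition NashMP (u1 u2 : A1 -> A2 -> R) (s : {ffun A1 -> R}) (a2 : A2) : Prop :=
  is_mixed s /\ br1 u1 s a2 /\ br2 u2 s a2.

Definition Vmp (u : A1 -> A2 -> R) (u1 u2 : A1 -> A2 -> R) (v : R) : Prop :=
  exists s a2, NashMP u1 u2 s a2 /\ v = eu u s a2.

Definition card_gt1 (V : R -> Prop) : Prop := exists x y, V x /\ V y /\ x <> y.
Definition card_eq1 (V : R -> Prop) : Prop := exists x, V x /\ forall y, V y -> y = x.

(* histories: chronological sequences of realized action profiles *)
Definition hist := seq (A1 * A2).
Definition strat1 := hist -> {ffun A1 -> R}.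
Definition strat2 := hist -> A2.
Definition valid1 (m1 : strat1) : Prop := forall h, is_mixed (m1 h).

Fixpoint value (u : A1 -> A2 -> R) (m1 : strat1) (m2 : strat2) (k : nat) (h : hist)
  : R :=
  match k with
  | 0 => 0
  | k'.+1 => \sum_a m1 h a * (u a (m2 h) + value u m1 m2 k' (rcons h (a, m2 h)))
  end.

Definition payoff (u : A1 -> A2 -> R) (T : nat) (m1 : strat1) (m2 : strat2) : R :=
  value u m1 m2 T [::].

Definition NashRep (u1 u2 : A1 -> A2 -> R) (T : nat) (m1 : strat1) (m2 : strat2)
  : Prop :=
  valid1 m1 /\
  (forall m1' : strat1, valid1 m1' -> payoff u1 T m1' m2 <= payoff u1 T m1 m2) /\
  (forall m2' : strat2, payoff u2 T m1 m2' <= payoff u2 T m1 m2).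

Definition cont1 (m1 : strat1) (h : hist) : strat1 := fun h' => m1 (h ++ h').
Definition cont2 (m2 : strat2) (h : hist) : strat2 := fun h' => m2 (h ++ h').

Definition SPE (u1 u2 : A1 -> A2 -> R) (T : nat) (m1 : strat1) (m2 : strat2) : Prop :=
  valid1 m1 /\
  forall h : hist, (size h < T)%N ->
    NashRep u1 u2 (T - size h) (cont1 m1 h) (cont2 m2 h).

Definition loc_subopt (u1 u2 : A1 -> A2 -> R) (T : nat) (m1 : strat1) (m2 : strat2)
  : Prop :=
  exists h : hist, (size h < T)%N /\ ~ NashMP u1 u2 (m1 h) (m2 h).

Definition Dset (u1 u2 : A1 -> A2 -> R) (d : R) : Prop :=
  exists s a2 s' a2', NashMP u1 u2 s a2 /\ NashMP u1 u2 s' a2' /\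
    d = eu u1 s a2 - eu u1 s' a2'.

Definition cond1 (u1 u2 : A1 -> A2 -> R) : Prop :=
  card_gt1 (Vmp u1 u1 u2) /\ card_gt1 (Vmp u2 u1 u2) /\
  exists s a2, is_mixed s /\ ~ NashMP u1 u2 s a2.

Definition cond2 (u1 u2 : A1 -> A2 -> R) : Prop :=
  card_gt1 (Vmp u1 u1 u2) /\ card_eq1 (Vmp u2 u1 u2) /\
  exists (s : {ffun A1 -> R}) (a1' : A1) (a2 : A2), is_mixed s /\
    eu u1 s a2 < u1 a1' a2 /\
    br2 u2 s a2 /\
    ((1 < #|supp s|)%N ->
      exists2 a, a \in supp s &
        forall a', a' \in supp s -> a' <> a ->
          exists ds : seq R, (forall i, (i < size ds)%N -> Dset u1 u2 (nth 0 ds i)) /\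
            u1 a a2 - u1 a' a2 = \sum_(d <- ds) d).

Definition cond3 (u1 u2 : A1 -> A2 -> R) : Prop :=
  card_eq1 (Vmp u1 u1 u2) /\ card_gt1 (Vmp u2 u1 u2) /\
  exists (s : {ffun A1 -> R}) (a2 a2' : A2), is_mixed s /\
    eu u2 s a2 < eu u2 s a2' /\ br1 u1 s a2.

End Game.

(* Main.v *)
Require Import Defs.
From HB Require Import structures.
From mathcomp Require Import all_boot all_order all_algebra.
From mathcomp Require Import reals.
From Stdlib Require Import Classical FunctionalExtensionality.
From mathcomp Require Import lra zify.
Import Order.TTheory GRing.Theory Num.Theory.
Local Open Scope ring_scope.
Set Implicit Arguments. Unset Strict Implicit. Unset Printing Implicit Defensive.

Section Proofs.
Variables (R : realType) (A1 A2 : finType) (u1 u2 : A1 -> A2 -> R).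
Local Notation prof := ({ffun A1 -> R} * A2)%type.
Local Notation hist := (hist A1 A2).
Local Notation strat1 := (strat1 R A1 A2).
Local Notation strat2 := (strat2 A1 A2).

Definition delta (a : A1) : {ffun A1 -> R} := [ffun b => (b == a)%:R].

Lemma delta_mixed a : is_mixed (delta a).
Proof.
split=> [b|]; first by rewrite ffunE ler0n.
rewrite (bigD1 a) //= ffunE eqxx big1 ?addr0 // => b /negbTE nb; by rewrite ffunE nb.
Qed.

Lemma sum_delta a (F : A1 -> R) : \sum_b delta a b * F b = F a.
Proof.
rewrite (bigD1 a) //= ffunE eqxx mul1r big1 ?addr0 // => b /negbTE nb.
by rewrite ffunE nb mul0r.
Qed.

Lemma eu_delta (u : A1 -> A2 -> R) a y : eu u (delta a) y = u a y.
Proof. exact: sum_delta. Qed.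

Lemma mixed_le (s : {ffun A1 -> R}) (F : A1 -> R) c :
  is_mixed s -> (forall b, F b <= c) -> \sum_b s b * F b <= c.
Proof.
move=> [s0 s1] H.
apply: (@le_trans _ _ (\sum_b s b * c)).
  by apply: ler_sum => b _; apply: ler_wpM2l.
by rewrite -mulr_suml s1 mul1r.
Qed.

Lemma mixed_const (s : {ffun A1 -> R}) c : is_mixed s -> \sum_b s b * c = c.
Proof. by move=> [_ s1]; rewrite -mulr_suml s1 mul1r. Qed.

Lemma mixed_eq (s : {ffun A1 -> R}) (F : A1 -> R) :
  is_mixed s -> (forall b, F b <= \sum_b' s b' * F b') ->
  forall b, b \in supp s -> F b = \sum_b' s b' * F b'.
Proof.
move=> [s0 s1] H b; rewrite inE => sb.
set V := \sum_b' s b' * F b' in H *.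
have E : \sum_b' s b' * (V - F b') = 0.
  under eq_bigr do rewrite mulrBr.
  by rewrite sumrB -mulr_suml s1 mul1r subrr.
have Hp : forall i, predT i -> 0 <= s i * (V - F i) by move=> i _; rewrite mulr_ge0 // subr_ge0.
have := psumr_eq0P Hp E (i:=b) isT.
move/eqP; rewrite mulf_eq0 (gt_eqF sb) /= subr_eq0 => /eqP ->. done.
Qed.

Lemma supp_nonempty (s : {ffun A1 -> R}) : is_mixed s -> exists b, b \in supp s.
Proof.
move=> [s0 s1]; apply: NNPP => N.
have : \sum_b s b = 0.
  apply: big1 => b _; apply/eqP; rewrite eq_le s0 andbT leNgt; apply/negP => sb.
  by apply: N; exists b; rewrite inE.
by rewrite s1 => /eqP; rewrite oner_eq0.
Qed.

Lemma br1_pure (s : {ffun A1 -> R}) y : is_mixed s -> br1 u1 s y ->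
  forall b, u1 b y <= eu u1 s y.
Proof. by move=> ms H b; rewrite -eu_delta; apply: H; apply: delta_mixed. Qed.

Lemma br1_supp (s : {ffun A1 -> R}) y : is_mixed s -> br1 u1 s y ->
  forall b, b \in supp s -> u1 b y = eu u1 s y.
Proof.
move=> ms H; exact: (mixed_eq (F := fun b => u1 b y) ms (br1_pure ms H)).
Qed.

Lemma pure_br1 (s : {ffun A1 -> R}) y :
  (forall b, u1 b y <= eu u1 s y) -> br1 u1 s y.
Proof. by move=> H s' ms'; apply: mixed_le. Qed.

Lemma value_cont (u : A1 -> A2 -> R) (m1 : strat1) (m2 : strat2) k h g :
  value u m1 m2 k (h ++ g) = value u (cont1 m1 h) (cont2 m2 h) k g.
Proof.
elim: k g => [|k IH] g //=.
by apply: eq_bigr => b _; rewrite -IH rcons_cat.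
Qed.

Lemma value_agree1 (u : A1 -> A2 -> R) (m1 m1' : strat1) (m2 : strat2) k h :
  (forall g, m1' (h ++ g) = m1 (h ++ g)) ->
  value u m1' m2 k h = value u m1 m2 k h.
Proof.
elim: k h => [|k IH] h H //=.
have := H [::]; rewrite cats0 => ->.
apply: eq_bigr => b _; rewrite IH // => g.
by rewrite cat_rcons H.
Qed.

Lemma value_agree2 (u : A1 -> A2 -> R) (m1 : strat1) (m2 m2' : strat2) k h :
  (forall g, m2' (h ++ g) = m2 (h ++ g)) ->
  value u m1 m2' k h = value u m1 m2 k h.
Proof.
elim: k h => [|k IH] h H //=.
have := H [::]; rewrite cats0 => ->.
apply: eq_bigr => b _; rewrite IH // => g.
by rewrite cat_rcons H.
Qed.


Definition EU (u : A1 -> A2 -> R) (p : prof) := eu u p.1 p.2.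
Definition NashP (p : prof) := NashMP u1 u2 p.1 p.2.

Section SD.
Variables (n1 : strat1) (n2 : strat2) (Q : nat -> prof).
Hypothesis h1 : forall g, n1 g = (Q (size g)).1.
Hypothesis h2 : forall g, n2 g = (Q (size g)).2.
Hypothesis hQ : forall j, NashP (Q j).

Lemma value_sd (u : A1 -> A2 -> R) k g :
  value u n1 n2 k g = \sum_(i < k) EU u (Q (size g + i)%N).
Proof.
elim: k g => [|k IH] g; first by rewrite big_ord0.
rewrite /= big_ord_recl addn0.
under eq_bigr do rewrite IH size_rcons mulrDr.
rewrite big_split /= mixed_const; last by rewrite h1; case: (hQ (size g)).
rewrite h1 h2; congr (_ + _); apply: eq_bigr => i _.
by rewrite addSnnS.
Qed.

Lemma dev1_sd (n1' : strat1) : valid1 n1' -> forall k g,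
  value u1 n1' n2 k g <= \sum_(i < k) EU u1 (Q (size g + i)%N).
Proof.
move=> v1; elim=> [|k IH] g; first by rewrite big_ord0.
rewrite /= big_ord_recl addn0.
apply: (@le_trans _ _ (\sum_b n1' g b * (u1 b (n2 g) +
     \sum_(i < k) EU u1 (Q ((size g).+1 + i)%N)))).
  apply: ler_sum => b _; apply: ler_wpM2l; first by case: (v1 g).
  by rewrite lerD2l; have := IH (rcons g (b, n2 g)); rewrite size_rcons.
under eq_bigr do rewrite mulrDr.
rewrite big_split /= mixed_const //.
have -> : \sum_(i < k) EU u1 (Q ((size g).+1 + i)%N) =
          \sum_(i < k) EU u1 (Q (size g + i.+1)%N).
  by apply: eq_bigr => i _; rewrite addSnnS.
rewrite lerD2r h2 /EU; case: (hQ (size g)) => _ [+ _]; apply; exact: v1.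
Qed.

Lemma dev2_sd (n2' : strat2) : forall k g,
  value u2 n1 n2' k g <= \sum_(i < k) EU u2 (Q (size g + i)%N).
Proof.
elim=> [|k IH] g; first by rewrite big_ord0.
have mQ : is_mixed (n1 g) by rewrite h1; case: (hQ (size g)).
rewrite /= big_ord_recl addn0.
apply: (@le_trans _ _ (\sum_b n1 g b * (u2 b (n2' g) +
     \sum_(i < k) EU u2 (Q ((size g).+1 + i)%N)))).
  apply: ler_sum => b _; apply: ler_wpM2l; first by case: mQ.
  by rewrite lerD2l; have := IH (rcons g (b, n2' g)); rewrite size_rcons.
under eq_bigr do rewrite mulrDr.
rewrite big_split /= mixed_const //.
have -> : \sum_(i < k) EU u2 (Q ((size g).+1 + i)%N) =
          \sum_(i < k) EU u2 (Q (size g + i.+1)%N).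
  by apply: eq_bigr => i _; rewrite addSnnS.
rewrite lerD2r /EU h1; case: (hQ (size g)) => _ [_]; apply.
Qed.

Lemma NashRep_sd k : NashRep u1 u2 k n1 n2.
Proof.
split; first by move=> g; rewrite h1; case: (hQ (size g)).
split.
  move=> m1' v1; rewrite /payoff value_sd; exact: dev1_sd.
move=> m2'; rewrite /payoff value_sd; exact: dev2_sd.
Qed.
End SD.


Section Generic.
Variables (s0 : {ffun A1 -> R}) (a0 : A2) (P : A1 -> A2 -> nat -> prof) (L : nat).
Hypothesis ms0 : is_mixed s0.
Hypothesis hP : forall x y i, NashP (P x y i).

Definition gs1 : strat1 := fun h =>
  match h with [::] => s0 | p :: r => (P p.1 p.2 (size r)).1 end.
Definition gs2 : strat2 := fun h =>
  match h with [::] => a0 | p :: r => (P p.1 p.2 (size r)).2 end.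

Definition Wv (u : A1 -> A2 -> R) x y := \sum_(i < L) EU u (P x y i).

Hypothesis C1 : forall b, u1 b a0 + Wv u1 b a0 <= \sum_b' s0 b' * (u1 b' a0 + Wv u1 b' a0).
Hypothesis C2 : forall y, \sum_b s0 b * (u2 b y + Wv u2 b y) <=
                          \sum_b s0 b * (u2 b a0 + Wv u2 b a0).

Lemma gen_value (u : A1 -> A2 -> R) b y : value u gs1 gs2 L [:: (b, y)] = Wv u b y.
Proof.
have := value_cont u gs1 gs2 L [:: (b,y)] [::]; rewrite /= => ->.
rewrite (@value_sd (cont1 gs1 [:: (b,y)]) (cont2 gs2 [:: (b,y)]) (P b y)) //.
Qed.

Lemma gen_dev1 (m1 : strat1) b : valid1 m1 -> value u1 m1 gs2 L [:: (b, a0)] <= Wv u1 b a0.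
Proof.
move=> v1; have := value_cont u1 m1 gs2 L [:: (b,a0)] [::]; rewrite /= => ->.
have := (@dev1_sd (cont2 gs2 [:: (b,a0)]) (P b a0) _ _ (cont1 m1 [:: (b,a0)]) _ L [::]).
by apply => // g; apply: v1.
Qed.

Lemma gen_dev2 (m2 : strat2) b y : value u2 gs1 m2 L [:: (b, y)] <= Wv u2 b y.
Proof.
have := value_cont u2 gs1 m2 L [:: (b,y)] [::]; rewrite /= => ->.
have := (@dev2_sd (cont1 gs1 [:: (b,y)]) (P b y) _ _ (cont2 m2 [:: (b,y)]) L [::]).
by apply.
Qed.

Lemma gen_SPE : SPE u1 u2 L.+1 gs1 gs2.
Proof.
split; first by case=> [|p r] //=; case: (hP p.1 p.2 (size r)).
case=> [|p r] Hs.
  rewrite subn0; split; first by move=> g; case: g => [|p r] //=; case: (hP p.1 p.2 (size r)).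
  rewrite /payoff (_ : cont2 gs2 [::] = gs2) // (_ : cont1 gs1 [::] = gs1) //.
  have EV : forall u, value u gs1 gs2 L.+1 [::] = \sum_b s0 b * (u b a0 + Wv u b a0).
    by move=> u /=; apply: eq_bigr => b _; rewrite gen_value.
  rewrite !EV.
  split.
    move=> m1' v1 /=.
    apply: (@le_trans _ _ (\sum_b m1' [::] b * (u1 b a0 + Wv u1 b a0))).
      apply: ler_sum => b _; apply: ler_wpM2l; first by case: (v1 [::]).
      by rewrite lerD2l; apply: gen_dev1.
    by apply: mixed_le.
  move=> m2' /=.
  apply: (@le_trans _ _ (\sum_b s0 b * (u2 b (m2' [::]) + Wv u2 b (m2' [::])))).
    apply: ler_sum => b _; apply: ler_wpM2l; first by case: ms0.
    by rewrite lerD2l; apply: gen_dev2.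
  exact: C2.
apply: (@NashRep_sd _ _ (fun j => P p.1 p.2 (size r + j)%N)) => g; rewrite /cont1 /cont2 /= ?size_cat //.
Qed.

Lemma gen_subopt : ~ NashMP u1 u2 s0 a0 -> loc_subopt u1 u2 L.+1 gs1 gs2.
Proof. by move=> N; exists [::]. Qed.
End Generic.

Lemma gt1_hilo (u : A1 -> A2 -> R) : card_gt1 (Vmp u u1 u2) ->
  exists N N', NashP N /\ NashP N' /\ EU u N' < EU u N.
Proof.
move=> [x [y [[s [a [Ns ->]]] [[s' [a' [Ns' ->]]] ne]]]].
case: (ltgtP (eu u s a) (eu u s' a')) => H.
- by exists (s', a'), (s, a).
- by exists (s, a), (s', a').
- by [].
Qed.

Lemma eq1_const (u : A1 -> A2 -> R) : card_eq1 (Vmp u u1 u2) ->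
  exists v, forall N, NashP N -> EU u N = v.
Proof.
move=> [v [_ H]]; exists v => N NN; apply: H; exists N.1, N.2; split => //.
Qed.

Lemma archi_K (B gap : R) : 0 < gap -> exists K : nat, B <= K%:R * gap.
Proof.
move=> g0; exists (Num.truncn (B / gap)).+1.
rewrite -ler_pdivrMr //; apply: ltW; exact: truncnS_gt.
Qed.

Lemma le_sum_norm (I : finType) (F : I -> R) i : F i <= \sum_j `|F j|.
Proof.
rewrite (bigD1 i) //=; apply: (le_trans (ler_norm _)).
by rewrite lerDl sumr_ge0.
Qed.

Lemma sum_const_ord (c : R) n : \sum_(i < n) c = n%:R * c.
Proof. by rewrite sumr_const card_ord mulr_natl. Qed.

Lemma supp_sum (s : {ffun A1 -> R}) (F G : A1 -> R) : is_mixed s ->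
  (forall b, b \in supp s -> F b = G b) -> \sum_b s b * F b = \sum_b s b * G b.
Proof.
move=> [s0 _] H; apply: eq_bigr => b _.
case: (boolP (b \in supp s)) => [/H -> //|]; rewrite inE -leNgt => sb.
have -> : s b = 0 by apply/eqP; rewrite eq_le sb s0.
by rewrite !mul0r.
Qed.


Lemma case3 : cond3 u1 u2 -> exists T : nat, (0 < T)%N /\
     exists (m1 : strat1) (m2 : strat2), SPE u1 u2 T m1 m2 /\ loc_subopt u1 u2 T m1 m2.
Proof.
move=> [/eq1_const [v1 Hv1] [/gt1_hilo [N [N' [NN [NN' gap]]]] [s [a2 [a2' [ms [lt br]]]]]]].
have g0 : 0 < EU u2 N - EU u2 N' by rewrite subr_gt0.
have [K HK] := archi_K (\sum_y `|eu u2 s y - eu u2 s a2|) g0.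
pose P := fun (x : A1) (y : A2) (i : nat) => if y == a2 then N else N'.
have hP : forall x y i, NashP (P x y i) by move=> x y i; rewrite /P; case: ifP.
have W1 : forall b y, Wv P K u1 b y = K%:R * v1.
  move=> b y; rewrite /Wv; transitivity (\sum_(i < K) v1).
    by apply: eq_bigr => i _; apply: Hv1.
  by rewrite sum_const_ord.
have W2 : forall b y, Wv P K u2 b y = K%:R * EU u2 (if y == a2 then N else N').
  by move=> b y; rewrite /Wv /P sum_const_ord.
exists K.+1; split => //.
exists (gs1 s P), (gs2 a2 P); split; last first.
  by apply: gen_subopt => -[_ [_ /(_ a2')]]; rewrite leNgt lt.
apply: gen_SPE => //.
  move=> b; under eq_bigr do rewrite W1 mulrDr; rewrite W1 big_split /= mixed_const //.
  by rewrite lerD2r; apply: br1_pure.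
move=> y; under eq_bigr do rewrite W2 mulrDr; rewrite big_split /= mixed_const //.
under [X in _ <= X]eq_bigr do rewrite W2 mulrDr; rewrite big_split /= mixed_const //.
rewrite eqxx; case: eqP => [-> //|_].
have H1 := le_trans (le_sum_norm (fun y => eu u2 s y - eu u2 s a2) y) HK.
rewrite /= mulrBr /eu in H1; lra.
Qed.


Lemma pure_nonNash : (exists s a2, is_mixed s /\ ~ NashMP u1 u2 s a2) ->
  exists a1 a2, ~ NashMP u1 u2 (delta a1) a2.
Proof.
move=> [s [a2 [ms NN]]]; apply: NNPP => H; apply: NN.
have HN : forall a1 a2, NashMP u1 u2 (delta a1) a2.
  by move=> a1 a2'; apply: NNPP => N; apply: H; exists a1, a2'.
have E1 : forall b b' y, u1 b y = u1 b' y.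
  move=> b b' y; apply/eqP; rewrite eq_le.
  have [_ [h1 _]] := HN b y; have [_ [h1' _]] := HN b' y.
  have := br1_pure (delta_mixed b) h1 b'; have := br1_pure (delta_mixed b') h1' b.
  by rewrite !eu_delta => -> ->.
have E2 : forall b y y', u2 b y = u2 b y'.
  move=> b y y'; apply/eqP; rewrite eq_le.
  have [_ [_ h2]] := HN b y; have [_ [_ h2']] := HN b y'.
  have := h2 y'; have := h2' y; by rewrite !eu_delta => -> ->.
split => //; split.
  apply: pure_br1 => b; rewrite /eu.
  under eq_bigr do rewrite (E1 _ b); by rewrite mixed_const.
move=> y; rewrite /eu; under eq_bigr do rewrite (E2 _ y a2); done.
Qed.

Lemma case1 : cond1 u1 u2 -> exists T : nat, (0 < T)%N /\
     exists (m1 : strat1) (m2 : strat2), SPE u1 u2 T m1 m2 /\ loc_subopt u1 u2 T m1 m2.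
Proof.
move=> [/gt1_hilo [N1 [N1' [NN1 [NN1' gap1]]]] [/gt1_hilo [N2 [N2' [NN2 [NN2' gap2]]]] ex]].
have [a1 [a2 NN]] := pure_nonNash ex.
have g1 : 0 < EU u1 N1 - EU u1 N1' by rewrite subr_gt0.
have g2 : 0 < EU u2 N2 - EU u2 N2' by rewrite subr_gt0.
have [K1 HK1] := archi_K (\sum_b `|u1 b a2 - u1 a1 a2|) g1.
have [K2 HK2] := archi_K (\sum_y `|u2 a1 y - u2 a1 a2|) g2.
pose K := (K1 + K2)%N.
pose P := fun (x : A1) (y : A2) (i : nat) =>
  if (i < K)%N then (if x == a1 then N1 else N1') else (if y == a2 then N2 else N2').
have hP : forall x y i, NashP (P x y i).
  by move=> x y i; rewrite /P; case: ifP => _; case: ifP.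
have W : forall u b y, Wv P (K + K) u b y =
    K%:R * EU u (if b == a1 then N1 else N1') + K%:R * EU u (if y == a2 then N2 else N2').
  move=> u b y; rewrite /Wv big_split_ord /P /=.
  under eq_bigr do rewrite ltn_ord.
  under [X in _ + X = _]eq_bigr do rewrite ltnNge leq_addr /=.
  by rewrite !sum_const_ord.
exists (K + K).+1; split => //.
exists (gs1 (delta a1) P), (gs2 a2 P); split; last by apply: gen_subopt.
apply: gen_SPE => //; first exact: delta_mixed.
  move=> b; rewrite sum_delta !W.
  case: (eqVneq b a1) => [->|nb]; first by rewrite !eqxx lexx.
  rewrite ?eqxx.
  have H1 := le_trans (le_sum_norm (fun b => u1 b a2 - u1 a1 a2) b) HK1.
  have H2 : 0 <= K2%:R * (EU u1 N1 - EU u1 N1') by rewrite mulr_ge0 // ltW.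
  rewrite /= in H1; rewrite /K natrD; rewrite mulrBr in H1 H2; nra.
move=> y; rewrite !sum_delta !W.
case: (eqVneq y a2) => [->|ny]; first by rewrite !eqxx lexx.
rewrite ?eqxx.
have H1 := le_trans (le_sum_norm (fun y => u2 a1 y - u2 a1 a2) y) HK2.
have H2 : 0 <= K1%:R * (EU u2 N2 - EU u2 N2') by rewrite mulr_ge0 // ltW.
rewrite /= in H1; rewrite /K natrD; rewrite mulrBr in H1 H2; nra.
Qed.


Lemma ds_to_pairs (ds : seq R) : (forall i, (i < size ds)%N -> Dset u1 u2 (nth 0 ds i)) ->
  exists tl : seq (prof * prof), (forall t, t \in tl -> NashP t.1 /\ NashP t.2) /\
    \sum_(d <- ds) d = \sum_(t <- tl) (EU u1 t.1 - EU u1 t.2).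
Proof.
elim: ds => [|d ds IH] H; first by exists [::]; rewrite !big_nil.
have := H 0%N isT; rewrite /= => -[s [a [s' [a' [Ns [Ns' ->]]]]]].
have [tl [Htl Hs]] := IH (fun i hi => H i.+1 hi).
exists (((s, a), (s', a')) :: tl); split.
  by move=> t; rewrite inE => /orP [/eqP -> //|/Htl].
by rewrite !big_cons Hs.
Qed.

Lemma case2 : cond2 u1 u2 -> exists T : nat, (0 < T)%N /\
     exists (m1 : strat1) (m2 : strat2), SPE u1 u2 T m1 m2 /\ loc_subopt u1 u2 T m1 m2.
Proof.
move=> [/gt1_hilo [N1 [N1' [NN1 [NN1' gap1]]]] [/eq1_const [v2 Hv2] [s [a1' [a2 [ms [lt [br c]]]]]]]].
have [a [asupp Hc]] : exists a, a \in supp s /\ forall a', a' \in supp s -> a' <> a ->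
    exists ds : seq R, (forall i, (i < size ds)%N -> Dset u1 u2 (nth 0 ds i)) /\
      u1 a a2 - u1 a' a2 = \sum_(d <- ds) d.
  case: (ltnP 1 #|supp s|) => H.
    by have [a Ha Hc] := c H; exists a.
  have [a Ha] := supp_nonempty ms; exists a; split => // a' Ha' ne; exfalso.
  have : (#|[set a; a']| <= #|supp s|)%N.
    by apply: subset_leq_card; apply/subsetP => x; rewrite in_set2 => /orP [] /eqP ->.
  rewrite cards2; case: eqP => [E|_]; first by move=> _; apply: ne; rewrite E.
  by move=> /= H2; have := leq_trans H2 H.
have : forall b, exists l : seq (prof * prof),
    (forall t, t \in l -> NashP t.1 /\ NashP t.2) /\
    (if (b \in supp s) && (b != a)
     then u1 a a2 - u1 b a2 = \sum_(t <- l) (EU u1 t.1 - EU u1 t.2) else l = [::]).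
  move=> b; case E: ((b \in supp s) && (b != a)); last by exists [::].
  move/andP: E => [bs nb].
  have [ds [Hds Heq]] := Hc b bs (elimN eqP nb).
  have [tl [Htl Hs]] := ds_to_pairs Hds.
  by exists tl; split => //; rewrite Heq Hs.
move=> /fin_all_exists [f Hf].
pose sl := flatten [seq [seq (b, t) | t <- f b] | b <- enum A1].
have Hsl : forall q, q \in sl -> q.2 \in f q.1.
  move=> q /flattenP [r /mapP [b _ ->] /mapP [t tin ->]] //.
pose S := size sl.
pose d0 := (a, (N1, N1)).
pose P := fun (x : A1) (y : A2) (i : nat) =>
  if (i < S)%N then (if x == (nth d0 sl i).1 then (nth d0 sl i).2.1 else (nth d0 sl i).2.2)
  else (if x \in supp s then N1 else N1').
have hP : forall x y i, NashP (P x y i).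
  move=> x y i; rewrite /P; case: ifP => [iS|_]; last by case: ifP.
  have /Hsl /(Hf _).1 [h1 h2] := mem_nth d0 iS.
  by case: ifP.
have g1 : 0 < EU u1 N1 - EU u1 N1' by rewrite subr_gt0.
have [K HK] := archi_K (\sum_b `|u1 b a2 - u1 a a2|) g1.
pose C := \sum_(q <- sl) EU u1 q.2.2.
pose Dl := fun x => \sum_(t <- f x) (EU u1 t.1 - EU u1 t.2).
have W1 : forall x y, Wv P (S + K) u1 x y =
   C + Dl x + K%:R * EU u1 (if x \in supp s then N1 else N1').
  move=> x y; rewrite /Wv big_split_ord /P /=.
  under eq_bigr do rewrite ltn_ord.
  under [X in _ + X = _]eq_bigr do rewrite ltnNge leq_addr /=.
  rewrite sum_const_ord; congr (_ + _).
  pose G := fun q : A1 * (prof * prof) =>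
     EU u1 (if x == q.1 then q.2.1 else q.2.2).
  rewrite -(big_mkord xpredT (fun i => G (nth d0 sl i))).
rewrite /S -(big_nth d0 xpredT G).
  have -> : \sum_(q <- sl) G q = C + \sum_(q <- sl) (x == q.1)%:R * (EU u1 q.2.1 - EU u1 q.2.2).
    rewrite /C -big_split /=; apply: eq_bigr => q _; rewrite /G.
    by case: eqP => _; rewrite ?mul1r ?mul0r ?addr0 // addrC subrK.
  congr (_ + _); rewrite big_flatten /= big_map.
  under eq_bigr do rewrite big_map /= -mulr_sumr.
  rewrite big_enum /= (bigD1 x) //=.
  rewrite eqxx mul1r [X in _ + X]big1 ?addr0 // => j nj.
  by rewrite eq_sym (negbTE nj) mul0r.
have DlE : forall x, Dl x = if (x \in supp s) && (x != a) then u1 a a2 - u1 x a2 else 0.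
  move=> x; rewrite /Dl; have := (Hf x).2; case: ifP => _ -> //; by rewrite big_nil.
have W2 : forall x y, Wv P (S + K) u2 x y = (S + K)%:R * v2.
  move=> x y; rewrite /Wv; transitivity (\sum_(i < S + K) v2).
    by apply: eq_bigr => i _; apply: Hv2.
  by rewrite sum_const_ord.
have Hin : forall b, b \in supp s -> u1 b a2 + Wv P (S + K) u1 b a2 = u1 a a2 + (C + K%:R * EU u1 N1).
  move=> b bs; rewrite W1 DlE bs /=; case: eqP => [->|_] /=; lra.
exists (S + K).+1; split => //.
exists (gs1 s P), (gs2 a2 P); split; last first.
  by apply: gen_subopt => -[_ [/br1_pure H _]]; have := H ms a1'; rewrite leNgt lt.
apply: gen_SPE => //.
  move=> b; rewrite (supp_sum (G := fun _ => u1 a a2 + (C + K%:R * EU u1 N1))) // ?mixed_const //.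
  case: (boolP (b \in supp s)) => bs; first by rewrite Hin.
  rewrite W1 DlE (negbTE bs) /=.
  have H1 := le_trans (le_sum_norm (fun b => u1 b a2 - u1 a a2) b) HK.
  rewrite /= mulrBr in H1; lra.
move=> y; under eq_bigr do rewrite W2 mulrDr.
under [X in _ <= X]eq_bigr do rewrite W2 mulrDr.
rewrite !big_split /= !mixed_const // lerD2r; exact: br.
Qed.

Lemma maximal_hist (Q : hist -> Prop) T :
  (exists h, (size h < T)%N /\ ~ Q h) ->
  exists h, (size h < T)%N /\ ~ Q h /\
    forall x, x <> [::] -> (size (h ++ x) < T)%N -> Q (h ++ x).
Proof.
move=> [h0 H0].
suff : forall n h, (T - size h <= n)%N -> (size h < T)%N /\ ~ Q h -> exists h, (size h < T)%N /\ ~ Q h /\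
    forall x, x <> [::] -> (size (h ++ x) < T)%N -> Q (h ++ x).
  by move=> S; exact: (S (T - size h0)%N h0 (leqnn _) H0).
elim=> [|n IH] h Hn [Hs HQ].
  by move: Hn; rewrite leqn0 subn_eq0 leqNgt Hs.
case: (classic (forall x, x <> [::] -> (size (h ++ x) < T)%N -> Q (h ++ x))) => H.
  by exists h.
have [x Hx] : exists x, ~ (x <> [::] -> (size (h ++ x) < T)%N -> Q (h ++ x)).
  by apply: NNPP => N; apply: H => x; apply: NNPP => N'; apply: N; exists x.
have nx : x <> [::] by move=> E; apply: Hx => /(_ E).
have sx : (size (h ++ x) < T)%N.
  by apply: NNPP => N; apply: Hx => _ /N.
have qx : ~ Q (h ++ x) by move=> q; apply: Hx.
apply: (IH (h ++ x)) => //.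
rewrite size_cat; case: x nx {Hx sx qx} => [//|z x] _ /=.
move: Hn; rewrite subnDA; case: (T - size h)%N => [|m] //=.
by rewrite ltnS subSS => /(leq_trans (leq_subr _ _)).
Qed.

Lemma gt1_or_eq1 (V : R -> Prop) : (exists v, V v) -> card_gt1 V \/ card_eq1 V.
Proof.
move=> [v Vv]; case: (classic (forall y, V y -> y = v)) => H.
  by right; exists v.
left; have [y Hy] : exists y, ~ (V y -> y = v).
  by apply: NNPP => N; apply: H => y; apply: NNPP => N'; apply: N; exists y.
exists v, y; split => //; split; first by apply: NNPP => N; apply: Hy.
by move=> E; apply: Hy => _; rewrite E.
Qed.

Lemma value_eq1 (u : A1 -> A2 -> R) v (m1 : strat1) (m2 : strat2) :
  (forall N, NashP N -> EU u N = v) ->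
  forall k g, (forall x, (size x < k)%N -> NashMP u1 u2 (m1 (g ++ x)) (m2 (g ++ x))) ->
  value u m1 m2 k g = k%:R * v.
Proof.
move=> Hv; elim=> [|k IH] g H; first by rewrite mul0r.
have Hg : NashMP u1 u2 (m1 g) (m2 g) by have := H [::] isT; rewrite cats0.
have E : forall b, value u m1 m2 k (rcons g (b, m2 g)) = k%:R * v.
  by move=> b; apply: IH => x hx; rewrite cat_rcons; apply: H.
rewrite /=; under eq_bigr do rewrite E mulrDr.
rewrite big_split /= mixed_const; last by case: Hg.
have := Hv (m1 g, m2 g) Hg; rewrite /EU /eu /= => ->.
by rewrite -nat1r mulrDl mul1r.
Qed.


Section SPEat.
Variables (T : nat) (m1 : strat1) (m2 : strat2).
Hypothesis spe : SPE u1 u2 T m1 m2.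

Lemma spe_at1 g k : (T - size g)%N = k.+1 -> forall b,
  u1 b (m2 g) + value u1 m1 m2 k (rcons g (b, m2 g)) <= value u1 m1 m2 k.+1 g.
Proof.
move=> Hk b.
have sg : (size g < T)%N by rewrite -subn_gt0 Hk.
have [v1 [Hd _]] := spe.2 g sg; rewrite Hk in Hd.
pose m1' : strat1 := fun x => if x is [::] then delta b else cont1 m1 g x.
have vm : valid1 m1' by case=> [|p x] /=; [apply: delta_mixed | apply: v1].
have E0 : cont2 m2 g [::] = m2 g by rewrite /cont2 cats0.
have E0' : cont1 m1 g [::] = m1 g by rewrite /cont1 cats0.
have E1 : forall (u : A1 -> A2 -> R) (n2 : strat2) c y, value u (cont1 m1 g) (cont2 n2 g) k [:: (c, y)]
   = value u m1 n2 k (rcons g (c, y)).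
  by move=> u n2 c y; rewrite -cats1 value_cont.
have := Hd m1' vm; rewrite /payoff /= sum_delta.
rewrite (@value_agree1 u1 (cont1 m1 g) m1') // E1 E0 E0'.
by under eq_bigr do rewrite E1.
Qed.

Lemma spe_at2 g k : (T - size g)%N = k.+1 -> forall y,
  \sum_b m1 g b * (u2 b y + value u2 m1 m2 k (rcons g (b, y))) <= value u2 m1 m2 k.+1 g.
Proof.
move=> Hk y.
have sg : (size g < T)%N by rewrite -subn_gt0 Hk.
have [v1 [_ Hd]] := spe.2 g sg; rewrite Hk in Hd.
pose m2' : strat2 := fun x => if x is [::] then y else cont2 m2 g x.
have E0 : cont2 m2 g [::] = m2 g by rewrite /cont2 cats0.
have E0' : cont1 m1 g [::] = m1 g by rewrite /cont1 cats0.
have E1 : forall (u : A1 -> A2 -> R) (n2 : strat2) c z, value u (cont1 m1 g) (cont2 n2 g) k [:: (c, z)]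
   = value u m1 n2 k (rcons g (c, z)).
  by move=> u n2 c z; rewrite -cats1 value_cont.
have := Hd m2'; rewrite /payoff /=.
under eq_bigr do rewrite (@value_agree2 u2 _ (cont2 m2 g) m2') // E1.
rewrite E0 E0'.
move=> H; apply: (le_trans H); rewrite le_eqVlt; apply/orP; left; apply/eqP; apply: eq_bigr => a _; by rewrite E1.
Qed.

Lemma spe_sums j : forall g, (size g + j)%N = T ->
  (forall x, (size x < j)%N -> NashMP u1 u2 (m1 (g ++ x)) (m2 (g ++ x))) ->
  exists ps : seq prof, size ps = j /\ (forall p, p \in ps -> NashP p) /\
    value u1 m1 m2 j g = \sum_(p <- ps) EU u1 p.
Proof.
elim: j => [|j IH] g Hs HN; first by exists [::]; rewrite big_nil.
have Hk : (T - size g)%N = j.+1 by rewrite -Hs addKn.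
have Hg : NashMP u1 u2 (m1 g) (m2 g) by have := HN [::] isT; rewrite cats0.
have ms : is_mixed (m1 g) by case: Hg.
pose F := fun b => u1 b (m2 g) + value u1 m1 m2 j (rcons g (b, m2 g)).
have HF : forall b, F b <= \sum_b' m1 g b' * F b' by move=> b; exact: (spe_at1 Hk b).
have [b bs] := supp_nonempty ms.
have Eb := mixed_eq ms HF bs.
have S1 : (size (rcons g (b, m2 g)) + j)%N = T by rewrite size_rcons addSnnS.
have S2 : forall x, (size x < j)%N -> NashMP u1 u2 (m1 (rcons g (b, m2 g) ++ x)) (m2 (rcons g (b, m2 g) ++ x)).
  by move=> x hx; rewrite cat_rcons; apply: HN.
have [ps [sz [Np Ev]]] := IH _ S1 S2.
exists ((m1 g, m2 g) :: ps); split; first by rewrite /= sz.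
split; first by move=> p; rewrite inE => /orP [/eqP -> //|/Np].
rewrite big_cons -Ev.
have -> : value u1 m1 m2 j.+1 g = \sum_b' m1 g b' * F b' by [].
rewrite -Eb /F; congr (_ + _).
by rewrite (br1_supp ms Hg.2.1 bs).
Qed.

Lemma spe_last g : (T - size g)%N = 1%N -> NashMP u1 u2 (m1 g) (m2 g).
Proof.
move=> Hk; have ms : is_mixed (m1 g) by apply: spe.1.
split => //; split.
  apply: pure_br1 => b; have := spe_at1 Hk b; rewrite /=.
  by under eq_bigr do rewrite addr0; rewrite addr0.
move=> y; have := spe_at2 Hk y; rewrite /=.
by under eq_bigr do rewrite addr0; under [X in _ <= X -> _]eq_bigr do rewrite addr0.
Qed.

End SPEat.

Lemma zip_sum (f : prof -> R) (p q : seq prof) : size p = size q ->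
  \sum_(x <- zip p q) (f x.1 - f x.2) = \sum_(x <- p) f x - \sum_(x <- q) f x.
Proof.
elim: p q => [|x p IH] [|y q] //=; first by rewrite !big_nil subrr.
move=> [E]; rewrite !big_cons IH //=; lra.
Qed.

End Proofs.

Theorem mainTheorem6 (R : realType) (A1 A2 : finType)
  (hA1 : (0 < #|A1|)%N) (hA2 : (0 < #|A2|)%N) (u1 u2 : A1 -> A2 -> R) :
  (exists T : nat, (0 < T)%N /\
     exists (m1 : strat1 R A1 A2) (m2 : strat2 A1 A2),
       SPE u1 u2 T m1 m2 /\ loc_subopt u1 u2 T m1 m2)
  <-> (cond1 u1 u2 \/ cond2 u1 u2 \/ cond3 u1 u2).
Proof.
split; last by case=> [/case1|[/case2|/case3]].
move=> [T [T0 [m1 [m2 [spe [h0 [sh0 nh0]]]]]]].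
have [x1 _] := card_gt0P hA1.
have [x2 _] := card_gt0P hA2.
pose g0 := nseq T.-1 (x1, x2).
have N0 : NashMP u1 u2 (m1 g0) (m2 g0).
  by apply: (spe_last spe); rewrite size_nseq; lia.
have ne1 : exists v, Vmp u1 u1 u2 v by exists (eu u1 (m1 g0) (m2 g0)), (m1 g0), (m2 g0).
have ne2 : exists v, Vmp u2 u1 u2 v by exists (eu u2 (m1 g0) (m2 g0)), (m1 g0), (m2 g0).
have [h [sh [nh Hmax]]] := maximal_hist (Q := fun h => NashMP u1 u2 (m1 h) (m2 h))
   (ex_intro _ h0 (conj sh0 nh0)).
have [k Hk] : exists k, (T - size h)%N = k.+1 by exists (T - size h).-1; lia.
have HN : forall z x, (size x < k)%N ->
    NashMP u1 u2 (m1 (rcons h z ++ x)) (m2 (rcons h z ++ x)).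
  move=> z x hx; rewrite cat_rcons; apply: Hmax => //; rewrite size_cat /=; lia.
have ms : is_mixed (m1 h) by apply: spe.1.
case: (gt1_or_eq1 ne1) => [G1|E1]; case: (gt1_or_eq1 ne2) => [G2|E2].
- left; split => //; split => //; exists (m1 h0), (m2 h0); split => //; exact: spe.1.
- right; left.
  have [v2 Hv2] := eq1_const E2.
  have E : forall z, value u2 m1 m2 k (rcons h z) = k%:R * v2.
    by move=> z; exact: (value_eq1 Hv2 (HN z)).
  have br : br2 u2 (m1 h) (m2 h).
    move=> y; have := spe_at2 spe Hk y; rewrite /=.
    under eq_bigr do rewrite E mulrDr.
    under [X in _ <= X -> _]eq_bigr do rewrite E mulrDr.
    by rewrite !big_split /= !mixed_const // lerD2r.
  have nbr1 : ~ br1 u1 (m1 h) (m2 h) by move=> b1; apply: nh.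
  have [a1' lt] : exists a1', eu u1 (m1 h) (m2 h) < u1 a1' (m2 h).
    apply: NNPP => N; apply: nbr1; apply: pure_br1 => b; rewrite leNgt; apply/negP => L.
    by apply: N; exists b.
  split => //; split => //; exists (m1 h), a1', (m2 h); do !split => //.
  move=> _.
  have [a asupp] := supp_nonempty ms; exists a => // a' a's ne.
  pose F := fun b => u1 b (m2 h) + value u1 m1 m2 k (rcons h (b, m2 h)).
  have HF : forall b, F b <= \sum_b' m1 h b' * F b' by move=> b; exact: (spe_at1 spe Hk b).
  have Ea := mixed_eq ms HF asupp.
  have Ea' := mixed_eq ms HF a's.
  have S1 : forall z, (size (rcons h z) + k)%N = T by move=> z; rewrite size_rcons; lia.
  have [pa [sza [Npa Eva]]] := spe_sums spe (S1 (a, m2 h)) (HN (a, m2 h)).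
  have [pa' [sza' [Npa' Eva']]] := spe_sums spe (S1 (a', m2 h)) (HN (a', m2 h)).
  pose d := (m1 h, m2 h).
  exists [seq EU u1 x.1 - EU u1 x.2 | x <- zip pa' pa]; split.
    move=> i; rewrite size_map size_zip sza sza' minnn => hi.
    rewrite (nth_map (d, d)) ?size_zip ?sza ?sza' ?minnn // nth_zip ?sza ?sza' //=.
    exists (nth d pa' i).1, (nth d pa' i).2, (nth d pa i).1, (nth d pa i).2.
    split; first by apply: Npa'; apply: mem_nth; rewrite sza'.
    split; first by apply: Npa; apply: mem_nth; rewrite sza.
    by [].
  rewrite big_map zip_sum ?sza ?sza' // -Eva -Eva'.
  move: Ea Ea'; rewrite /F => <-; lra.
- right; right.
  have [v1 Hv1] := eq1_const E1.
  have E : forall z, value u1 m1 m2 k (rcons h z) = k%:R * v1.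
    by move=> z; exact: (value_eq1 Hv1 (HN z)).
  have br : br1 u1 (m1 h) (m2 h).
    apply: pure_br1 => b; have := spe_at1 spe Hk b; rewrite /=.
    under eq_bigr do rewrite E mulrDr.
    by rewrite E big_split /= mixed_const // lerD2r.
  have nbr2 : ~ br2 u2 (m1 h) (m2 h) by move=> b2; apply: nh.
  have [y lt] : exists y, eu u2 (m1 h) (m2 h) < eu u2 (m1 h) y.
    apply: NNPP => N; apply: nbr2 => y; rewrite leNgt; apply/negP => L.
    by apply: N; exists y.
  split => //; split => //; exists (m1 h), (m2 h), y; do !split => //.
- exfalso; apply: nh; split => //.
  have [v1 Hv1] := eq1_const E1.
  have [v2 Hv2] := eq1_const E2.
  have Ea : forall z, value u1 m1 m2 k (rcons h z) = k%:R * v1.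
    by move=> z; exact: (value_eq1 Hv1 (HN z)).
  have Eb : forall z, value u2 m1 m2 k (rcons h z) = k%:R * v2.
    by move=> z; exact: (value_eq1 Hv2 (HN z)).
  split.
    apply: pure_br1 => b; have := spe_at1 spe Hk b; rewrite /=.
    under eq_bigr do rewrite Ea mulrDr.
    by rewrite Ea big_split /= mixed_const // lerD2r.
  move=> y; have := spe_at2 spe Hk y; rewrite /=.
  under eq_bigr do rewrite Eb mulrDr.
  under [X in _ <= X -> _]eq_bigr do rewrite Eb mulrDr.
  by rewrite !big_split /= !mixed_const // lerD2r.
Qed.
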